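(* Let $G$ be an unweighted digraph without loops, let $0<\tau\le1$, and let $M_\tau(t)=I-At+(D-\tau I)\tau t^2+(A-S)\tau^2t^3$. Then $1/\tau$ is always an eigenvalue of $M_\tau(t)$ and its geometric multiplicity equals the number of connected components of the undirected part $G_U$. Moreover, $-1/\tau$ is an eigenvalue of $M_\tau(t)$ if and only if $G_U$ has at least one bipartite connected component, and then its geometric multiplicity equals the number of bipartite connected components of $G_U$.
   Context: $G=(V,E)$ with adjacency matrix $A$, $S=A\circ A^T$, $D=\mathrm{diag}(\mathrm{diag}(A^2))$. The undirected part $G_U$ is the undirected graph on $V$ with edge $\{i,j\}$ iff both $(i,j),(j,i)\in E$; isolated vertices count as (bipartite) connected components. The geometric multiplicity of an eigenvalue $\lambda$ of $M_\tau(t)$ is $\dim\ker M_\tau(\lambda)$. *)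

(* Defs.v *)
From HB Require Import structures.
From mathcomp Require Import all_boot all_order all_algebra.
Set Implicit Arguments. Unset Strict Implicit. Unset Printing Implicit Defensive.
Import Order.TTheory GRing.Theory Num.Theory.
Local Open Scope ring_scope.

(* A digraph G on vertex set 'I_n is given by its edge relation E
   ((i,j) \in E iff E i j).  Loop-freeness is the hypothesis irreflexive E. *)

Definition adjmx (R : ringType) (n : nat) (E : rel 'I_n) : 'M[R]_n :=
  \matrix_(i, j) (E i j)%:R.

Definition Smx (R : ringType) (n : nat) (A : 'M[R]_n) : 'M[R]_n :=
  \matrix_(i, j) (A i j * A^T i j).

Definition Dmx (R : ringType) (n : nat) (A : 'M[R]_n) : 'M[R]_n :=
  \matrix_(i, j) ((i == j)%:R * (A *m A) i i).

Definition Mtau (R : comRingType) (n : nat) (E : rel 'I_n) (tau t : R) : 'M[R]_n :=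
  let A := adjmx R E in
  1%:M - t *: A + (tau * t ^+ 2) *: (Dmx A - tau%:M)
       + (tau ^+ 2 * t ^+ 3) *: (A - Smx A).

Definition is_eigenvalue (R : comRingType) (n : nat) (M : R -> 'M[R]_n) (l : R) :=
  \det (M l) = 0.

(* dim ker M = dim { v column vector | M v = 0 }; computed as the dimension of
   the row kernel of M^T (u *m M^T = 0 iff M *m u^T = 0). *)
Definition dim_ker (F : fieldType) (n : nat) (M : 'M[F]_n) : nat :=
  \rank (kermx M^T).

Definition geom_mult (F : fieldType) (n : nat) (M : F -> 'M[F]_n) (l : F) : nat :=
  dim_ker (M l).

Definition urel (n : nat) (E : rel 'I_n) : rel 'I_n := fun i j => E i j && E j i.

(* connected components of G_U (isolated vertices included), represented by
   their canonical roots *)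
Definition ucomp_roots (n : nat) (E : rel 'I_n) : {set 'I_n} :=
  [set r | roots (urel E) r].

Definition num_ucomp (n : nat) (E : rel 'I_n) : nat := #|ucomp_roots E|.

Definition bip_comp (n : nat) (E : rel 'I_n) (r : 'I_n) : bool :=
  [exists f : {ffun 'I_n -> bool}, [forall i, forall j,
     (connect (urel E) r i && urel E i j) ==> (f i != f j)]].

Definition num_bip_ucomp (n : nat) (E : rel 'I_n) : nat :=
  #|[set r in ucomp_roots E | bip_comp E r]|.

(* Main.v *)
Require Import Defs.
From HB Require Import structures.
From mathcomp Require Import all_boot all_order all_algebra.
From mathcomp Require Import ring lra.
Set Implicit Arguments. Unset Strict Implicit. Unset Printing Implicit Defensive.
Import Order.TTheory GRing.Theory Num.Theory.
Local Open Scope ring_scope.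

Lemma rank_ker_gen (F : fieldType) k n (L : 'M[F]_n) (B : 'M[F]_(k,n)) (K : 'M[F]_(n,k)) :
  B *m K = 1%:M -> B *m L = 0 ->
  (forall v : 'rV_n, v *m L = 0 -> v = v *m K *m B) -> \rank (kermx L) = k.
Proof.
move=> BK BL Hv.
have fB : row_free B by apply/row_freeP; exists K.
have -> : \rank (kermx L) = \rank B; last exact/eqP.
apply/eqmx_rank/andP; split; last by rewrite sub_kermx BL.
apply/row_subP => i; rewrite (Hv (row i (kermx L))) ?submxMl //.
by rewrite -row_mul mulmx_ker row0.
Qed.

Lemma det0_rank (F : fieldType) n (M : 'M[F]_n) :
  \det M = 0 <-> (0 < \rank (kermx M))%N.
Proof.
rewrite mxrank_ker subn_gt0 ltn_neqAle rank_leq_row andbT.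
have : (\rank M == n) = (\det M \is a GRing.unit) by rewrite -unitmxE -row_free_unit.
move=> ->; rewrite unitfE negbK; split; by move/eqP.
Qed.

Lemma conn_ind (T : finType) (e : rel T) (P : T -> Prop) r :
  P r -> (forall y z, connect e r y -> e y z -> P y -> P z) ->
  forall x, connect e r x -> P x.
Proof.
move=> Pr IH x /connectP [p ep ->]; elim/last_ind: p ep => //= p z IHp.
rewrite rcons_path last_rcons => /andP [ep ez].
apply: (IH (last r p)) => //; last exact: IHp.
by apply/connectP; exists p.
Qed.
Definition sw (R : realFieldType) n (E : rel 'I_n) i j : R := (urel E i j)%:R.
Definition deg (R : realFieldType) n (E : rel 'I_n) i : R := \sum_k sw R E i k.
Definition Lg (R : realFieldType) n (E : rel 'I_n) (eps : R) : 'M[R]_n :=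
  \matrix_(i, j) ((i == j)%:R * deg R E i + eps * sw R E i j).

Lemma sw_sym (R : realFieldType) n (E : rel 'I_n) i j : sw R E i j = sw R E j i.
Proof. by rewrite /sw /urel andbC. Qed.

Lemma AA (R : realFieldType) n (E : rel 'I_n) i j :
  adjmx R E i j * adjmx R E j i = sw R E i j.
Proof. by rewrite /adjmx !mxE /sw /urel -natrM mulnb. Qed.

Lemma AA2 (R : realFieldType) n (E : rel 'I_n) i :
  (adjmx R E *m adjmx R E) i i = deg R E i.
Proof. rewrite mxE; apply: eq_bigr => k _; exact: AA. Qed.

Lemma Mtau_eq (R : realFieldType) n (E : rel 'I_n) (tau : R) (s : R) :
  tau != 0 -> s ^+ 2 = 1 ->
  (Mtau E tau (s * tau^-1))^T = tau^-1 *: Lg E (- s).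
Proof.
move=> t0 s2; apply/matrixP => i j; rewrite !mxE.
have -> : \sum_k adjmx R E j k * adjmx R E k j = deg R E j.
  by apply: eq_bigr => k _; exact: AA.
have -> : (E j i)%:R * (E i j)%:R = sw R E i j :> R.
  by rewrite -natrM mulnb /sw /urel andbC.
rewrite eq_sym -[tau *+ _]mulr_natr !expr_div_n [s ^+ 3]exprS s2 mulr1.
have -> : (i == j)%:R * deg R E j = (i == j)%:R * deg R E i :> R.
  by case: eqP => [->|]; rewrite ?mulr0 ?mul0r.
by field.
Qed.

Lemma sum_delta (R : realFieldType) n (j : 'I_n) (F : 'I_n -> R) :
  \sum_i (i == j)%:R * F i = F j.
Proof.
rewrite (bigD1 j) //= eqxx mul1r big1 ?addr0 // => i /negbTE ->; by rewrite mul0r.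
Qed.

Lemma quad (R : realFieldType) n (E : rel 'I_n) (eps : R) (v : 'rV[R]_n) :
  eps ^+ 2 = 1 ->
  \sum_i \sum_j sw R E i j * (v 0 i + eps * v 0 j) ^+ 2 =
  2 * \sum_j (v *m Lg E eps) 0 j * v 0 j.
Proof.
move=> e2.
set a := fun i => v 0 i.
have E1 : \sum_i \sum_j sw R E i j * (v 0 i + eps * v 0 j) ^+ 2 =
   \sum_i \sum_j (sw R E i j * a i ^+ 2 + sw R E i j * a j ^+ 2
                   + 2 * eps * (sw R E i j * a i * a j)).
  apply: eq_bigr => i _; apply: eq_bigr => j _.
  have -> : (v 0 i + eps * v 0 j) ^+ 2 = a i ^+ 2 + eps ^+ 2 * a j ^+ 2 + 2 * eps * (a i * a j).
    rewrite /a; ring.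
  rewrite e2; ring.
rewrite E1.
under eq_bigr => i _ do rewrite !big_split /= -!mulr_sumr.
rewrite !big_split /= -!mulr_sumr.
have T2 : \sum_i \sum_j sw R E i j * a j ^+ 2 = \sum_i \sum_j sw R E i j * a i ^+ 2.
  rewrite exchange_big /=; apply: eq_bigr => i _; apply: eq_bigr => j _.
  by rewrite sw_sym.
rewrite T2.
have E2 : \sum_j (v *m Lg E eps) 0 j * v 0 j =
   \sum_j (a j * deg R E j * a j + eps * \sum_i sw R E i j * a i * a j).
  apply: eq_bigr => j _; rewrite !mxE.
  under eq_bigr => i _ do rewrite !mxE mulrDr.
  rewrite big_split /=.
  have -> : \sum_i v 0 i * ((i == j)%:R * deg R E i) = a j * deg R E j.
    rewrite -(sum_delta j (fun i => a i * deg R E i)); apply: eq_bigr => i _.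
    rewrite /a; ring.
  rewrite mulrDl; congr (_ + _); rewrite mulr_suml mulr_sumr; apply: eq_bigr => i _.
  rewrite /a; ring.
rewrite E2 big_split /= -mulr_sumr [X in _ = 2 * (_ + eps * X)]exchange_big /=.
have -> : \sum_i \sum_j sw R E i j * a i ^+ 2 = \sum_i a i * deg R E i * a i.
  apply: eq_bigr => i _; rewrite /deg mulr_sumr mulr_suml; apply: eq_bigr => j _.
  ring.
ring.
Qed.

Lemma ker_edge (R : realFieldType) n (E : rel 'I_n) (eps : R) (v : 'rV[R]_n) :
  eps ^+ 2 = 1 -> v *m Lg E eps = 0 ->
  forall i j, urel E i j -> v 0 i + eps * v 0 j = 0.
Proof.
move=> e2 vL i j eij.
have := quad E v e2; rewrite vL [X in _ = 2 * X]big1 ?mulr0 => [H|k _]; last by rewrite mxE mul0r.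
have nn : forall i j, 0 <= sw R E i j * (v 0 i + eps * v 0 j) ^+ 2.
  by move=> x y; rewrite mulr_ge0 ?sqr_ge0 // /sw ler0n.
have Hi := psumr_eq0P (fun x _ => sumr_ge0 _ (fun y _ => nn x y)) H.
have Hij : sw R E i j * (v 0 i + eps * v 0 j) ^+ 2 = 0.
  by apply: (psumr_eq0P _ (Hi i isT)) => // y _; exact: nn.
move: Hij; rewrite /sw eij mul1r => /eqP; rewrite sqrf_eq0 => /eqP //.
Qed.

Lemma urel_sym n (E : rel 'I_n) : symmetric (urel E).
Proof. by move=> i j; rewrite /urel andbC. Qed.

Lemma root_edge n (E : rel 'I_n) i j : urel E i j -> fingraph.root (urel E) i = fingraph.root (urel E) j.
Proof.
move=> eij; apply/fingraph.rootP; first exact/sym_connect_sym/urel_sym.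
exact: connect1.
Qed.

Lemma sw0 (R : realFieldType) n (E : rel 'I_n) i j : ~~ urel E i j -> sw R E i j = 0.
Proof. by rewrite /sw => /negbTE ->. Qed.

Lemma rank_comp (R : realFieldType) n (E : rel 'I_n) (eps : R) (C : {set 'I_n})
  (sg : 'I_n -> R) :
  eps ^+ 2 = 1 ->
  (forall x, x \in C -> fingraph.root (urel E) x = x) ->
  (forall x, x \in C -> sg x = 1) ->
  (forall i j, urel E i j -> fingraph.root (urel E) j \in C -> sg i = - eps * sg j) ->
  (forall v : 'rV[R]_n, v *m Lg E eps = 0 -> forall j,
      v 0 j = if fingraph.root (urel E) j \in C then sg j * v 0 (fingraph.root (urel E) j) else 0) ->
  \rank (kermx (Lg E eps)) = #|C|.
Proof.
move=> e2 Croot Csg Hsg Hv.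
pose B : 'M[R]_(#|C|, n) :=
  \matrix_(c, j) ((fingraph.root (urel E) j == enum_val c)%:R * sg j).
pose K : 'M[R]_(n, #|C|) := \matrix_(j, c) (j == enum_val c)%:R.
apply: (@rank_ker_gen _ _ _ _ B K).
- apply/matrixP => c c'; rewrite !mxE.
  rewrite (eq_bigr (fun j => (j == enum_val c')%:R *
        ((fingraph.root (urel E) j == enum_val c)%:R * sg j))); last first.
    by move=> j _; rewrite !mxE mulrC.
  rewrite sum_delta Croot ?enum_valP // Csg ?enum_valP // mulr1.
  by rewrite (inj_eq enum_val_inj) eq_sym.
- apply/matrixP => c j; rewrite !mxE.
  set r := enum_val c.
  under eq_bigr => i _ do rewrite !mxE mulrDr.
  rewrite big_split /=.
  have -> : \sum_i (fingraph.root (urel E) i == r)%:R * sg i * ((i == j)%:R * deg R E i)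
      = (fingraph.root (urel E) j == r)%:R * sg j * deg R E j.
    rewrite -(sum_delta j (fun i => (fingraph.root (urel E) i == r)%:R * sg i * deg R E i)).
    by apply: eq_bigr => i _; rewrite mulrCA.
  have -> : \sum_i (fingraph.root (urel E) i == r)%:R * sg i * (eps * sw R E i j)
      = \sum_i (fingraph.root (urel E) j == r)%:R * (- eps * sg j) * (eps * sw R E i j).
    apply: eq_bigr => i _.
    have [eij|neij] := boolP (urel E i j); last by rewrite sw0 // !mulr0.
    rewrite (root_edge eij); case: eqP => [rj|]; last by rewrite !mul0r.
    by rewrite (Hsg i j eij) // rj enum_valP.
  rewrite -mulr_sumr -mulr_sumr /deg.
  have -> : (fingraph.root (urel E) j == r)%:R * sg j * (\sum_k sw R E j k) +
    (fingraph.root (urel E) j == r)%:R * (- eps * sg j) * (eps * \sum_i sw R E i j) =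
    (fingraph.root (urel E) j == r)%:R * sg j * (\sum_k sw R E j k) * (1 - eps ^+ 2).
    have -> : \sum_i sw R E i j = \sum_k sw R E j k.
      by apply: eq_bigr => i _; rewrite sw_sym.
    ring.
  by rewrite e2 subrr mulr0.
- move=> v vL; apply/rowP => j.
  rewrite [RHS]mxE Hv //.
  under eq_bigr => c _ do rewrite !mxE.
  have -> : \sum_(c : 'I_#|C|) (\sum_i v 0 i * K i c) * ((fingraph.root (urel E) j == enum_val c)%:R * sg j) =
            \sum_(c : 'I_#|C|) v 0 (enum_val c) * ((fingraph.root (urel E) j == enum_val c)%:R * sg j).
    apply: eq_bigr => c _; congr (_ * _).
    rewrite (eq_bigr (fun i => (i == enum_val c)%:R * v 0 i)); last first.
      by move=> i _; rewrite mxE mulrC.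
    by rewrite sum_delta.
  case: ifP => rC.
    pose c0 := enum_rank_in rC (fingraph.root (urel E) j).
    have ec0 : enum_val c0 = fingraph.root (urel E) j by rewrite enum_rankK_in.
    rewrite (bigD1 c0) //= ec0 eqxx mul1r big1 ?addr0; first by rewrite mulrC.
    move=> c nc; rewrite -ec0 (inj_eq enum_val_inj) eq_sym (negbTE nc).
    by rewrite mul0r mulr0.
  rewrite big1 // => c _; case: eqP => [ex|]; last by rewrite mul0r mulr0.
  by move: rC; rewrite ex enum_valP.
Qed.

Lemma rank_ker_scale (F : fieldType) n (c : F) (L : 'M[F]_n) :
  c != 0 -> \rank (kermx (c *: L)) = \rank (kermx L).
Proof. by move=> c0; rewrite !mxrank_ker mxrank_scale_nz. Qed.

Lemma connect_symU n (E : rel 'I_n) : connect_sym (urel E).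
Proof. exact/sym_connect_sym/urel_sym. Qed.

Lemma conn_root_to n (E : rel 'I_n) j : connect (urel E) (fingraph.root (urel E) j) j.
Proof. by rewrite connect_symU connect_root. Qed.

Lemma in_ucomp n (E : rel 'I_n) x :
  (x \in ucomp_roots E) = (fingraph.root (urel E) x == x).
Proof. by rewrite inE. Qed.

Lemma rank_lap (R : realFieldType) n (E : rel 'I_n) :
  \rank (kermx (Lg E (-1 : R))) = num_ucomp E.
Proof.
have e2 : (-1 : R) ^+ 2 = 1 by rewrite sqrrN expr1n.
apply: (@rank_comp R n E (-1) (ucomp_roots E) (fun _ => 1)) => //.
- by move=> x; rewrite in_ucomp => /eqP.
- by move=> i j _ _; rewrite opprK mulr1.
move=> v vL j; rewrite in_ucomp fingraph.root_root ?eqxx; last exact: connect_symU.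
rewrite mul1r.
have H : forall y, connect (urel E) j y -> v 0 y = v 0 j.
  apply: conn_ind => // y z _ eyz <-.
  have := ker_edge e2 vL eyz; rewrite mulN1r => /eqP; rewrite subr_eq0 => /eqP.
  by move=> ->.
by rewrite H // connect_root.
Qed.

Definition proper n (E : rel 'I_n) r (f : {ffun 'I_n -> bool}) : bool :=
  [forall i, forall j, (connect (urel E) r i && urel E i j) ==> (f i != f j)].

Definition col n (E : rel 'I_n) r : {ffun 'I_n -> bool} :=
  odflt [ffun=> true] [pick f | proper E r f].

Lemma col_ok n (E : rel 'I_n) r : bip_comp E r ->
  forall i j, connect (urel E) r i -> urel E i j -> col E r i != col E r j.
Proof.
rewrite /bip_comp /col; case: pickP => [f Hf _ | H /existsP [f Hf]]; last first.
  by have := H f; rewrite /proper Hf.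
move=> i j ri eij; move: Hf => /forallP /(_ i) /forallP /(_ j) /implyP; apply.
by rewrite ri eij.
Qed.

Definition sgb (R : realFieldType) n (E : rel 'I_n) j : R :=
  let r := fingraph.root (urel E) j in if col E r j == col E r r then 1 else -1.

Lemma sgb_flip (R : realFieldType) (a b c : bool) : a != b ->
  (if a == c then 1 else -1 : R) = - (if b == c then 1 else -1).
Proof. by case: a; case: b; case: c => //= _; rewrite opprK. Qed.

Lemma rank_slap (R : realFieldType) n (E : rel 'I_n) :
  \rank (kermx (Lg E (1 : R))) = num_bip_ucomp E.
Proof.
have e2 : (1 : R) ^+ 2 = 1 by rewrite expr1n.
apply: (@rank_comp R n E 1 _ (@sgb R n E)) => //.
- by move=> x; rewrite inE in_ucomp => /andP [/eqP].
- move=> x; rewrite inE in_ucomp => /andP [/eqP rx _].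
  by rewrite /sgb rx eqxx.
- move=> i j eij; rewrite inE => /andP [_ bj].
  rewrite /sgb /= mulN1r (root_edge eij); apply: sgb_flip.
  apply: col_ok => //; rewrite -(root_edge eij); exact: conn_root_to.
move=> v vL j; set r := fingraph.root (urel E) j.
have edge : forall y z, urel E y z -> v 0 z = - v 0 y.
  move=> y z eyz; have := ker_edge e2 vL eyz; rewrite mul1r => /eqP.
  by rewrite addr_eq0 => /eqP ->; rewrite opprK.
have rr : fingraph.root (urel E) r = r by rewrite fingraph.root_root //; exact: connect_symU.
case: ifP => rC.
  move: rC; rewrite inE => /andP [_ br].
  have H : forall y, connect (urel E) r y ->
      v 0 y = (if col E r y == col E r r then 1 else -1) * v 0 r.
    apply: conn_ind; first by rewrite eqxx mul1r.
    move=> y z ry eyz Hy; rewrite (edge y z eyz) Hy.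
    have cz : col E r z != col E r y.
      by rewrite eq_sym; exact (col_ok br ry eyz).
    by rewrite (@sgb_flip R _ _ (col E r r) cz) mulNr.
  by rewrite /sgb -/r H // conn_root_to.
have H : forall y, connect (urel E) r y -> v 0 y = v 0 r \/ v 0 y = - v 0 r.
  apply: conn_ind; first by left.
  move=> y z _ eyz; rewrite (edge _ _ eyz); case=> ->; [by right | by left; rewrite opprK].
apply/eqP; apply/negPn/negP => vj0.
have vr0 : v 0 r != 0.
  by case: (H j (conn_root_to E j)) vj0 => ->; rewrite ?oppr_eq0.
move: rC; rewrite inE in_ucomp rr eqxx /=; move/negbT/negP; apply.
apply/existsP; exists [ffun i => 0 < v 0 i].
apply/forallP => i; apply/forallP => k; apply/implyP => /andP [ri eik].
rewrite !ffunE (edge _ _ eik) oppr_gt0.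
have vi0 : v 0 i != 0 by case: (H i ri) => ->; rewrite ?oppr_eq0.
by case: ltrgtP vi0 => // ->.
Qed.

Lemma gm_pos (R : realFieldType) n (E : rel 'I_n) (tau s : R) :
  tau != 0 -> s ^+ 2 = 1 ->
  geom_mult (Mtau E tau) (s * tau^-1) = \rank (kermx (Lg E (- s))) /\
  (is_eigenvalue (Mtau E tau) (s * tau^-1) <-> (0 < \rank (kermx (Lg E (- s))))%N).
Proof.
move=> t0 s2.
have G : geom_mult (Mtau E tau) (s * tau^-1) = \rank (kermx (Lg E (- s))).
  by rewrite /geom_mult /dim_ker Mtau_eq // rank_ker_scale // invr_eq0.
split => //; rewrite -G /is_eigenvalue /geom_mult /dim_ker -det_tr.
exact: det0_rank.
Qed.

Unset Implicit Arguments.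

Theorem proposition4p1 (R : realFieldType) (n : nat) (E : rel 'I_n)
  (hn : (0 < n)%N) (hloop : irreflexive E) (tau : R)
  (htau0 : 0 < tau) (htau1 : tau <= 1) :
  [/\ is_eigenvalue (Mtau E tau) tau^-1,
      geom_mult (Mtau E tau) tau^-1 = num_ucomp E,
      is_eigenvalue (Mtau E tau) (- tau^-1) <-> (0 < num_bip_ucomp E)%N
    & (0 < num_bip_ucomp E)%N ->
      geom_mult (Mtau E tau) (- tau^-1) = num_bip_ucomp E].
Proof.
have t0 : tau != 0 by rewrite gt_eqF.
have [G1 H1] := @gm_pos R n E tau 1 t0 (expr1n _ _).
have n2 : (-1 : R) ^+ 2 = 1 by rewrite sqrrN expr1n.
have [G2 H2] := @gm_pos R n E tau (-1) t0 n2.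
rewrite mul1r rank_lap in G1 H1.
rewrite mulN1r opprK rank_slap in G2 H2.
have pos : (0 < num_ucomp E)%N.
  rewrite /num_ucomp card_gt0; apply/set0Pn.
  exists (fingraph.root (urel E) (Ordinal hn)).
  by rewrite in_ucomp fingraph.root_root //; exact: connect_symU.
split => //; first exact/H1.
Qed.
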